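(* For all real numbers $a,b,c>0$, \[ \frac{\sqrt{6}\,(a+b+c)^2}{6\sqrt{a^4+b^4+c^4+a^2b^2+b^2c^2+c^2a^2}}\leq \frac{a}{\sqrt{2a^2+b^2+c^2}}+\frac{b}{\sqrt{2b^2+c^2+a^2}}+\frac{c}{\sqrt{2c^2+a^2+b^2}}. \] *)

(* Defs.v *)
From Stdlib Require Import Reals.

(* Main.v *)
Require Import Defs.
From Stdlib Require Import Reals Lra Psatz.
Open Scope R_scope.
Lemma poly (a b c : R) (ha : 0 < a) (hb : 0 < b) (hc : 0 < c) :
 (a+b+c)*(a*(2*a^2+b^2+c^2)+b*(2*b^2+c^2+a^2)+c*(2*c^2+a^2+b^2)) <=
 6*(a ^ 4 + b ^ 4 + c ^ 4 + a ^ 2 * b ^ 2 + b ^ 2 * c ^ 2 + c ^ 2 * a ^ 2).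
Proof.
 assert (h1: 0 <= (a-b)^2*(a^2-a*b+b^2)) by (apply Rmult_le_pos; [apply pow2_ge_0 | nra]).
 assert (h2: 0 <= (b-c)^2*(b^2-b*c+c^2)) by (apply Rmult_le_pos; [apply pow2_ge_0 | nra]).
 assert (h3: 0 <= (c-a)^2*(c^2-c*a+a^2)) by (apply Rmult_le_pos; [apply pow2_ge_0 | nra]).
 pose proof (pow2_ge_0 (a*b-b*c)). pose proof (pow2_ge_0 (b*c-c*a)). pose proof (pow2_ge_0 (c*a-a*b)).
 pose proof (pow2_ge_0 (a^2-b^2)). pose proof (pow2_ge_0 (b^2-c^2)). pose proof (pow2_ge_0 (c^2-a^2)).
 pose proof (pow2_ge_0 (a^2+b^2+c^2)). lra.
Qed.

Lemma key (x w s : R) (hx : 0 < x) (hw : 0 < w) (hs : 0 < s) :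
  x * (3 * s^2 - w) / (2 * s^3) <= x / sqrt w.
Proof.
  pose proof (sqrt_lt_R0 w hw) as hu.
  pose proof (sqrt_sqrt w (Rlt_le _ _ hw)) as hu2.
  set (u := sqrt w) in *.
  unfold Rdiv. rewrite Rmult_assoc. apply Rmult_le_compat_l; [lra|].
  assert (h : (3 * s^2 - w) * u <= 2 * s^3).
  { rewrite <- hu2. pose proof (pow2_ge_0 (s-u)).
    assert (0 <= (s-u)^2*(2*s+u)) by (apply Rmult_le_pos; lra). nra. }
  apply (Rmult_le_reg_r (2 * s^3 * u)). { apply Rmult_lt_0_compat; [|lra]. apply Rmult_lt_0_compat; [lra| apply pow_lt; lra]. }
  replace ((3 * s ^ 2 - w) * / (2 * s ^ 3) * (2 * s ^ 3 * u)) with ((3 * s^2 - w) * u) by (field; lra).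
  replace (/ u * (2 * s ^ 3 * u)) with (2 * s^3) by (field; lra). lra.
Qed.

Theorem mainTheorem5 (a b c : R) (ha : 0 < a) (hb : 0 < b) (hc : 0 < c) :
  sqrt 6 * (a + b + c) ^ 2 /
    (6 * sqrt (a ^ 4 + b ^ 4 + c ^ 4 + a ^ 2 * b ^ 2 + b ^ 2 * c ^ 2 + c ^ 2 * a ^ 2))
  <= a / sqrt (2 * a ^ 2 + b ^ 2 + c ^ 2)
   + b / sqrt (2 * b ^ 2 + c ^ 2 + a ^ 2)
   + c / sqrt (2 * c ^ 2 + a ^ 2 + b ^ 2).
Proof.
  pose proof (poly a b c ha hb hc) as hp.
  set (Q := a ^ 4 + b ^ 4 + c ^ 4 + a ^ 2 * b ^ 2 + b ^ 2 * c ^ 2 + c ^ 2 * a ^ 2) in *.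
  set (w1 := 2 * a ^ 2 + b ^ 2 + c ^ 2) in *.
  set (w2 := 2 * b ^ 2 + c ^ 2 + a ^ 2) in *.
  set (w3 := 2 * c ^ 2 + a ^ 2 + b ^ 2) in *.
  set (p := a + b + c) in *.
  set (T := a * w1 + b * w2 + c * w3) in *.
  assert (hw1 : 0 < w1) by (unfold w1; nra).
  assert (hw2 : 0 < w2) by (unfold w2; nra).
  assert (hw3 : 0 < w3) by (unfold w3; nra).
  assert (hpp : 0 < p) by (unfold p; lra).
  assert (hT : 0 < T) by (unfold T; nra).
  assert (hQ : 0 < Q) by (unfold Q; assert (0 < a^4) by (apply pow_lt; lra); pose proof (pow2_ge_0 (a*b)); pose proof (pow2_ge_0 (b*c)); pose proof (pow2_ge_0 (c*a)); pose proof (pow2_ge_0 (b^2)); pose proof (pow2_ge_0 (c^2)); nra).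
  assert (hm : 0 < T / p) by (apply Rdiv_lt_0_compat; lra).
  pose proof (sqrt_lt_R0 _ hm) as hs.
  pose proof (sqrt_sqrt _ (Rlt_le _ _ hm)) as hs2.
  set (s := sqrt (T / p)) in *.
  pose proof (key a w1 s ha hw1 hs).
  pose proof (key b w2 s hb hw2 hs).
  pose proof (key c w3 s hc hw3 hs).
  assert (hsum : p / s <= a / sqrt w1 + b / sqrt w2 + c / sqrt w3).
  { assert (e : a * (3 * s ^ 2 - w1) / (2 * s ^ 3) + b * (3 * s ^ 2 - w2) / (2 * s ^ 3)
              + c * (3 * s ^ 2 - w3) / (2 * s ^ 3) = p / s).
    { assert (s^2 = T/p) by (simpl; rewrite Rmult_1_r; exact hs2).
      replace (a * (3 * s ^ 2 - w1) / (2 * s ^ 3) + b * (3 * s ^ 2 - w2) / (2 * s ^ 3)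
              + c * (3 * s ^ 2 - w3) / (2 * s ^ 3)) with ((3 * s^2 * p - T) / (2 * s^3))
        by (unfold T, p; field; lra).
      replace (s^3) with (s * s^2) by ring. rewrite H2. field. lra. }
    lra. }
  eapply Rle_trans; [|exact hsum].
  pose proof (sqrt_lt_R0 Q hQ) as hU.
  pose proof (sqrt_sqrt Q (Rlt_le _ _ hQ)) as hU2.
  assert (h6 : 0 < sqrt 6) by (apply sqrt_lt_R0; lra).
  pose proof (sqrt_sqrt 6 ltac:(lra)) as h62.
  set (U := sqrt Q) in *. set (r := sqrt 6) in *.
  assert (hk : r * p * s <= 6 * U).
  { assert (sq : (r*p*s)^2 <= (6*U)^2).
    { replace ((r*p*s)^2) with ((r*r)*p*(p*(s*s))) by ring.
      rewrite h62, hs2. replace ((6*U)^2) with (36 * (U*U)) by ring. rewrite hU2.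
      replace (6 * p * (p * (T / p))) with (6 * (p*T)) by (field; lra). lra. }
    apply Rsqr_incr_0_var. { unfold Rsqr. simpl in sq. lra. } lra. }
  apply (Rmult_le_reg_r (6 * U * s)). { apply Rmult_lt_0_compat; lra. }
  replace (r * p ^ 2 / (6 * U) * (6 * U * s)) with (p * (r * p * s)) by (field; lra).
  replace (p / s * (6 * U * s)) with (p * (6 * U)) by (field; lra).
  apply Rmult_le_compat_l; lra.
Qed.
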